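(* Let $L \ge N$, let $\mathbf{T} \in \mathbb{R}^{L\times N}$ have full rank $N$, and let $\gamma>0$. Define $H:\mathbb{R}^N\rightrightarrows\mathbb{R}^N$ by $\mathbf{y}\in H(\mathbf{x})$ if and only if $\mathbf{x} = \mathbf{T}^{\dagger}S_\gamma\mathbf{T}(\mathbf{x}+\mathbf{y})$. Let $$\mathcal{U}_{\mathbf{T},\gamma} := \{\mathbf{x}\in\mathbb{R}^N : |(\mathbf{T}\mathbf{x})_j| > \gamma(\|\mathbf{T}\mathbf{T}^{\dagger}\|_\infty + 1)\ \text{for all } j=1,\dots,L\}.$$ Then for every $\mathbf{x}\in\mathcal{U}_{\mathbf{T},\gamma}$ the set $H(\mathbf{x})$ consists of exactly one element, namely $H(\mathbf{x}) = \{\gamma\,\mathbf{T}^{\dagger}\operatorname{sign}(\mathbf{T}\mathbf{x})\}$.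
   Context: $\mathbf{T}^*$ is the transpose, $\mathbf{T}^{\dagger}=(\mathbf{T}^*\mathbf{T})^{-1}\mathbf{T}^*$ the Moore–Penrose inverse. $S_\gamma:\mathbb{R}^L\to\mathbb{R}^L$ is componentwise soft shrinkage: $[S_\gamma(\mathbf{y})]_j = y_j-\gamma$ if $y_j\ge\gamma$, $y_j+\gamma$ if $y_j\le-\gamma$, $0$ if $|y_j|<\gamma$. $\|\mathbf{A}\|_\infty = \max_{\|\mathbf{z}\|_\infty=1}\|\mathbf{A}\mathbf{z}\|_\infty$ is the row-sum matrix norm, with $\|\mathbf{z}\|_\infty=\max_j|z_j|$. For $\mathbf{z}\in\mathbb{R}^L$ with no zero components, $\operatorname{sign}\mathbf{z} = (\operatorname{sign} z_j)_{j=1}^L$ with $\operatorname{sign} z_j = 1$ if $z_j>0$ and $-1$ if $z_j<0$. *)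

(* Defs.v *)
From mathcomp Require Import all_boot all_order all_algebra.
Set Implicit Arguments. Unset Strict Implicit. Unset Printing Implicit Defensive.
Import Order.TTheory GRing.Theory Num.Theory.
Local Open Scope ring_scope.

(* Moore-Penrose inverse of a full-column-rank matrix: (T^T T)^{-1} T^T *)
Definition pinv (R : realFieldType) (L N : nat) (T : 'M[R]_(L, N)) : 'M[R]_(N, L) :=
  invmx (T^T *m T) *m T^T.

Definition shrink1 (R : realFieldType) (g y : R) : R :=
  if g <= y then y - g else if y <= - g then y + g else 0.

Definition shrink (R : realFieldType) (L : nat) (g : R) (y : 'cV[R]_L) : 'cV[R]_L :=
  \col_j shrink1 g (y j ord0).

Definition mxnorm_inf (R : realFieldType) (m n : nat) (A : 'M[R]_(m, n)) : R :=
  \big[Num.max/0]_(i < m) \sum_(j < n) `|A i j|.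

(* componentwise sign (1 if > 0, -1 if < 0; used only on vectors with no zero entries) *)
Definition sgnv (R : realFieldType) (L : nat) (z : 'cV[R]_L) : 'cV[R]_L :=
  \col_j (if 0 < z j ord0 then 1 else -1).

Definition Hrel (R : realFieldType) (L N : nat) (T : 'M[R]_(L, N)) (g : R)
  (x y : 'cV[R]_N) : Prop :=
  x = pinv T *m shrink g (T *m (x + y)).

Definition U_set (R : realFieldType) (L N : nat) (T : 'M[R]_(L, N)) (g : R)
  (x : 'cV[R]_N) : Prop :=
  forall j : 'I_L, g * (mxnorm_inf (T *m pinv T) + 1) < `|(T *m x) j ord0|.

(* Main.v *)
Require Import Defs.
From mathcomp Require Import all_boot all_order all_algebra.
From mathcomp Require Import ring lra.
Import Order.TTheory GRing.Theory Num.Theory.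
Local Open Scope ring_scope.

Lemma solve_eq (V : zmodType) (x y w : V) : x = x + y - w -> y = w.
Proof.
move=> H; apply/eqP; rewrite -subr_eq0; apply/eqP; apply: (@addrI _ x).
by rewrite addr0 addrA; apply/esym.
Qed.

Section Aux.
Variable R : realFieldType.

Lemma rV_sq0 (L : nat) (w : 'rV[R]_L) : w *m w^T = 0 -> w = 0.
Proof.
move=> H0; apply/matrixP => i k; rewrite [RHS]mxE.
have := congr1 (fun M : 'M[R]_1 => M ord0 ord0) H0; rewrite !mxE => /eqP.
rewrite psumr_eq0 => [/allP Hall|j _]; last by rewrite mxE -expr2 sqr_ge0.
have := Hall k (mem_index_enum _); rewrite mxE /= -expr2 sqrf_eq0 => /eqP.
by rewrite (ord1 i).
Qed.

Lemma pinvK (L N : nat) (T : 'M[R]_(L, N)) : \rank T = N -> pinv T *m T = 1%:M.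
Proof.
move=> rT.
have fT : row_free T^T by rewrite /row_free mxrank_tr rT.
have uA : T^T *m T \in unitmx.
  rewrite -row_free_unit; apply: inj_row_free => u Hu.
  set w := u *m T^T.
  have H0 : w *m w^T = 0.
    by rewrite /w trmx_mul trmxK mulmxA -(mulmxA u) Hu mul0mx.
  have Hw : w = 0 by apply: rV_sq0.
  apply: (row_free_inj fT); by rewrite mul0mx.
by rewrite /pinv -mulmxA mulVmx.
Qed.

Lemma shrink_dev (g z : R) : 0 < g -> `|z - shrink1 g z| <= g.
Proof.
move=> g0; rewrite /shrink1 ler_norml; case: ifP => h1.
  by apply/andP; split; lra.
case: ifP => h2.
  by apply/andP; split; lra.
move/negbT: h1; move/negbT: h2; rewrite -!ltNge => h2 h1.
by apply/andP; split; lra.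
Qed.

Lemma shrink_big (g t e : R) : 0 < g -> g < `|t| - `|e| ->
  shrink1 g (t + e) = t + e - g * (if 0 < t then 1 else -1).
Proof.
move=> g0 H; rewrite /shrink1.
have Ht : `|e| <= `|t| - g by lra.
case: (ltrP 0 t) => tp.
  rewrite (ger0_norm (ltW tp)) in Ht.
  have := ler_norml e (t - g); rewrite Ht => /esym/andP[h _].
  have -> : g <= t + e by lra.
  by rewrite mulr1.
rewrite (ler0_norm tp) in Ht.
have := ler_norml e (- t - g); rewrite Ht => /esym/andP[_ h].
have -> : (g <= t + e) = false by apply/negbTE; rewrite -ltNge; lra.
have -> : t + e <= - g by lra.
by rewrite mulrN1 opprK.
Qed.

Lemma mxnorm_bound (L : nat) (M : 'M[R]_L) (v : 'cV[R]_L) j :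
  (forall k, `|v k ord0| <= 1) -> `|(M *m v) j ord0| <= mxnorm_inf M.
Proof.
move=> Hv; rewrite mxE.
apply: (le_trans (ler_norm_sum _ _ _)).
apply: (le_trans _ (le_bigmax _ _ j)).
apply: ler_sum => k _; rewrite normrM.
by rewrite -{2}(mulr1 `|M j k|) ler_wpM2l.
Qed.

Lemma key_gen (L : nat) (a b : 'cV[R]_L) (g n : R) : 0 < g ->
  (forall j, g * (n + 1) < `|a j ord0|) -> (forall j, `|b j ord0| <= n) ->
  shrink g (a + g *: b) = a + g *: b - g *: sgnv a.
Proof.
move=> g0 Ha Hb; apply/matrixP => j k; rewrite (ord1 k) !mxE.
apply: shrink_big => //.
have h1 := Ha j; have h2 : g * `|b j ord0| <= g * n by rewrite ler_pM2l.
rewrite normrM (gtr0_norm g0); lra.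
Qed.

End Aux.

Theorem theorem2p7 (R : realFieldType) (L N : nat) (T : 'M[R]_(L, N)) (g : R) :
  (N <= L)%N -> \rank T = N -> 0 < g ->
  forall x : 'cV[R]_N, U_set T g x ->
  forall y : 'cV[R]_N, Hrel T g x y <-> y = g *: (pinv T *m sgnv (T *m x)).
Proof.
move=> _ rT g0 x Ux y.
have PT := @pinvK R L N T rT.
set P := pinv T.
have key : forall v : 'cV[R]_L, (forall k, `|v k ord0| <= 1) ->
    P *m shrink g (T *m (x + g *: (P *m v))) = x + g *: (P *m v) - g *: (P *m sgnv (T *m x)).
  move=> v Hv.
  rewrite mulmxDr -scalemxAr mulmxA.
  rewrite (@key_gen R L _ _ g (mxnorm_inf (T *m P))) //; last first.
    by move=> j; apply: mxnorm_bound.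
  by rewrite !mulmxDr mulmxN -!scalemxAr !mulmxA PT !mul1mx.
have Hsig : forall k, `|(\col_j (((T *m (x + y)) j ord0 - shrink1 g ((T *m (x + y)) j ord0)) / g)) k ord0| <= 1.
  move=> k; rewrite mxE normrM normfV (gtr0_norm g0) ler_pdivrMr // mul1r.
  exact: shrink_dev.
split.
- rewrite /Hrel => Hx.
  set sig := \col_j (((T *m (x + y)) j ord0 - shrink1 g ((T *m (x + y)) j ord0)) / g) in Hsig.
  have Hs : shrink g (T *m (x + y)) = T *m (x + y) - g *: sig.
    apply/matrixP => j k; rewrite (ord1 k) !mxE; field; exact: lt0r_neq0.
  have Hy : y = g *: (P *m sig).
    by apply: (@solve_eq _ x); rewrite {1}Hx Hs mulmxBr mulmxA PT mul1mx -scalemxAr.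
  apply: (@solve_eq _ x); rewrite {1}Hx {1}Hy key //; first by rewrite -Hy.
- move=> ->; rewrite /Hrel key; first by rewrite addrK.
  by move=> k; rewrite mxE; case: ifP; rewrite ?normrN normr1.
Qed.
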